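(* Let $N=[n(i,j)]$, $\mathfrak h$, $\alpha_i$, $\mathcal A$, $F$, $v_1,\dots,v_r$ be as in the context. Suppose $\delta_1,\dots,\delta_r,\delta_{-1},\dots,\delta_{-r}\in\mathrm{Im}\,F$ are such that, with $\mathbf X_i=v_i\delta_i$ and $\mathbf X_{-i}=v_i^{-1}\delta_{-i}$, one has $[\mathbf X_i,\mathbf X_{-i}]=F(H_i)$ for all $i$ and $[\mathbf X_i,\mathbf X_{-j}]=0$ for $i\neq j$. Then also, for all $i\neq j$, $$\mathrm{ad}(\mathbf X_i)^{1-n(i,j)}(\mathbf X_j)=0\quad\text{and}\quad \mathrm{ad}(\mathbf X_{-i})^{1-n(i,j)}(\mathbf X_{-j})=0$$ in $\mathrm{Der}(\mathcal A)$.
   Context: A generalised Cartan matrix is $N=[n(i,j)]_{1\le i,j\le r}$ with $n(i,j)\in\mathbb Z$, $n(i,i)=2$, $n(i,j)\le 0$ for $i\neq j$, and $n(i,j)=0\iff n(j,i)=0$. Let $s$ be the corank of $N$, $\mathfrak h$ the complex vector space with basis $H_1,\dots,H_{r+s}$, and $\alpha_1,\dots,\alpha_r\in\mathfrak h^*$ linearly independent with $\alpha_j(H_i)=n(i,j)$ for $1\le i,j\le r$. $\mathcal A$ is a complex commutative algebra, $\mathrm{Der}(\mathcal A)$ its Lie algebra of derivations (commutator bracket); for $a\in\mathcal A$, $D\in\mathrm{Der}(\mathcal A)$, $aD$ is $b\mapsto aD(b)$. $F:\mathfrak h\to\mathrm{Der}(\mathcal A)$ is a Lie algebra homomorphism ($\mathfrak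 h$ abelian) and $v_1,\dots,v_r\in\mathcal A$ are invertible with $F(H)(v_i)=\alpha_i(H)v_i$ for all $H\in\mathfrak h$. *)

(* Defs.v *)
From HB Require Import structures.
From mathcomp Require Import all_boot all_order all_algebra.
From mathcomp Require Import complex reals.
Set Implicit Arguments. Unset Strict Implicit. Unset Printing Implicit Defensive.
Import Order.TTheory GRing.Theory Num.Theory.
Local Open Scope ring_scope.

(* The field of complex numbers, realised as R[i] for R : realType
   (any realType is a complete archimedean ordered field, i.e. the reals). *)
Notation Cplx R := (complex (Real.sort R)).

Definition gen_cartan (r : nat) (N : 'M[int]_r) : Prop :=
  [/\ forall i, N i i = 2%:Z,
      forall i j, i != j -> N i j <= 0 &
      forall i j, (N i j == 0) = (N j i == 0)].

Definition corank (K : fieldType) (r : nat) (N : 'M[int]_r) : nat :=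
  (r - \rank (map_mx (fun z : int => z%:~R : K) N))%N.

Definition is_derivation (K : comNzRingType) (A : comAlgType K) (D : A -> A) : Prop :=
  (forall (c : K) (x y : A), D (c *: x + y) = c *: D x + D y) /\
  (forall x y : A, D (x * y) = x * D y + D x * y).

Definition dbr (K : comNzRingType) (A : comAlgType K) (D1 D2 : A -> A) : A -> A :=
  fun b => D1 (D2 b) - D2 (D1 b).

Definition ad_pow (K : comNzRingType) (A : comAlgType K) (X : A -> A) (m : nat)
  (Y : A -> A) : A -> A := iter m (dbr X) Y.

Definition lmul_der (K : comNzRingType) (A : comAlgType K) (a : A) (D : A -> A) : A -> A :=
  fun b => a * D b.

(* The basis element H_k of h = C^(r+s), realised as row vectors. *)
Definition Hbasis (K : nzRingType) (n : nat) (k : 'I_n) : 'rV[K]_n := delta_mx 0 k.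

(* Main.v *)
Require Import Defs.
From HB Require Import structures.
From mathcomp Require Import all_boot all_order all_algebra.
From mathcomp Require Import complex reals.
From mathcomp Require Import ring.
Import Order.TTheory GRing.Theory Num.Theory.
Local Open Scope ring_scope.
Set Implicit Arguments. Unset Strict Implicit.

Section Gen.
Variables (K : fieldType) (n : nat) (A : comAlgType K) (F : 'rV[K]_n -> A -> A).
Hypothesis hF_lin : forall (c : K) (H H' : 'rV[K]_n) (b : A),
      F (c *: H + H') b = c *: F H b + F H' b.
Hypothesis hF_der : forall H, is_derivation (F H).
Hypothesis hF_hom : forall H H' (b : A), dbr (F H) (F H') b = 0.

Lemma F0 b : F 0 b = 0.
Proof using hF_lin hF_der hF_hom.
have h := hF_lin 1 0 0 b; rewrite scaler0 addr0 scale1r in h.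
by apply: (addrI (F 0 b)); rewrite addr0 -h.
Qed.

Lemma Flin2 c d Q P b : F (c *: Q + d *: P) b = c *: F Q b + d *: F P b.
Proof using hF_lin hF_der hF_hom.
rewrite hF_lin; congr (_ + _).
by have := hF_lin d P 0 b; rewrite addr0 F0 addr0.
Qed.

Lemma Fcomm H H' b : F H (F H' b) = F H' (F H b).
Proof using hF_lin hF_der hF_hom.
by have := hF_hom H H' b; rewrite /dbr => /eqP; rewrite subr_eq0 => /eqP.
Qed.

Lemma Fmul H x y : F H (x * y) = x * F H y + F H x * y.
Proof using hF_lin hF_der hF_hom. by case: (hF_der H) => _ ->. Qed.

Lemma F1 H : F H 1 = 0.
Proof using hF_lin hF_der hF_hom.
have h := Fmul H 1 1; rewrite !mul1r !mulr1 in h.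
by apply: (addrI (F H 1)); rewrite addr0 -h.
Qed.

Lemma eig_mul H x y al be : F H x = al *: x -> F H y = be *: y ->
  F H (x * y) = (al + be) *: (x * y).
Proof using hF_lin hF_der hF_hom.
move=> hx hy; rewrite Fmul hx hy -scalerAl -scalerAr scalerDl addrC //.
Qed.

Lemma eig_inv H x y al : x * y = 1 -> F H x = al *: x -> F H y = (- al) *: y.
Proof using hF_lin hF_der hF_hom.
move=> hxy hx.
have e : x * F H y = - (al *: 1).
  have := Fmul H x y; rewrite hxy F1 hx -scalerAl hxy => /eqP.
  by rewrite eq_sym addr_eq0 => /eqP.
have -> : F H y = y * (x * F H y) by rewrite mulrA (mulrC y) hxy mul1r.
by rewrite e mulrN -scalerAr mulr1 scaleNr.
Qed.

Lemma brk P Q u w be ga b : F P w = be *: w -> F Q u = ga *: u ->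
  dbr (lmul_der u (F P)) (lmul_der w (F Q)) b = (u * w) * (be *: F Q b - ga *: F P b).
Proof using hF_lin hF_der hF_hom.
move=> hw hu; rewrite /dbr /lmul_der !Fmul hw hu (Fcomm P Q b).
move: (F Q (F P b)) => t1; move: (F Q b) (F P b) => t2 t3.
rewrite -!scalerAl !mulrDr ?mulrBr -!scalerAr !mulrA (mulrC w u).
by rewrite opprD addrACA subrr add0r mulrN -scalerAr.
Qed.

Lemma step P Q u w p a b c d (Y : A -> A) :
  F P u = p *: u -> F P w = a *: w -> F Q u = b *: u ->
  (forall x, Y x = w * F (c *: Q + d *: P) x) ->
  forall x, dbr (lmul_der u (F P)) Y x
            = (u * w) * F ((a * c) *: Q + (a * d - (c * b + d * p)) *: P) x.
Proof using hF_lin hF_der hF_hom.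
move=> hu hw hQ hY x.
have -> : dbr (lmul_der u (F P)) Y x
    = dbr (lmul_der u (F P)) (lmul_der w (F (c *: Q + d *: P))) x.
  by rewrite /dbr /lmul_der !hY.
rewrite (@brk _ _ _ _ _ (c * b + d * p) _ hw); last first.
  by rewrite Flin2 hQ hu !scalerA -scalerDl.
congr (_ * _); rewrite !Flin2.
by rewrite scalerDr !scalerA scalerBl addrA.
Qed.

Lemma serre P Q u w p a b k :
  F P u = p *: u -> F P w = a *: w -> F Q u = b *: u ->
  [\/ [/\ k = 1%N, a = 0 & b = 0], (k = 2%N /\ (a = 0 \/ (a = -p /\ b = 0)))
    | (k = 3%N /\ (a = 0 \/ a = -p))] ->
  forall x, ad_pow (lmul_der u (F P)) k (lmul_der w (F Q)) x = 0.
Proof using hF_lin hF_der hF_hom.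
move=> hu hw hQ hk.
have Y0 : forall x, lmul_der w (F Q) x = w * F (1 *: Q + 0 *: P) x.
  by move=> x; rewrite Flin2 scale1r scale0r addr0.
have S1 := step hu hw hQ Y0.
have S2 := step hu (eig_mul hu hw) hQ S1.
have S3 := step hu (eig_mul hu (eig_mul hu hw)) hQ S2.
case: hk => [[-> ha hb]|[-> hab]|[-> hab]] x; rewrite /ad_pow /=.
- rewrite S1 Flin2; subst a b.
  match goal with |- _ * (?c *: _ + ?d *: _) = 0 =>
    have [-> ->] : c = 0 /\ d = 0 by split; ring end.
  by rewrite !scale0r addr0 mulr0.
- rewrite S2 Flin2.
  case: hab => [ha|[ha hb]]; subst a; try subst b;
  match goal with |- _ * (?c *: _ + ?d *: _) = 0 =>
    have [-> ->] : c = 0 /\ d = 0 by split; ring end;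
  by rewrite !scale0r addr0 mulr0.
- rewrite S3 Flin2.
  case: hab => ha; subst a;
  match goal with |- _ * (?c *: _ + ?d *: _) = 0 =>
    have [-> ->] : c = 0 /\ d = 0 by split; ring end;
  by rewrite !scale0r addr0 mulr0.
Qed.

End Gen.

Lemma scal_unit (K : fieldType) (A : comAlgType K) (x y : A) (c d : K) :
  x * y = 1 -> c *: x = d *: x -> c = d.
Proof.
move=> hxy h.
have : (c - d) *: (x * y) = 0 by rewrite scalerAl scalerBl h subrr mul0r.
by rewrite hxy => /eqP; rewrite scaler_eq0 oner_eq0 orbF subr_eq0 => /eqP.
Qed.

Lemma cancel_unit (K : fieldType) (A : comAlgType K) (x y z : A) :
  x * y = 1 -> x * z = 0 -> z = 0.
Proof.
move=> hxy h.
by rewrite -[z]mul1r -hxy (mulrC x) -mulrA h mulr0.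
Qed.

Lemma sum_delta (K : nzRingType) (m r : nat) (M : 'M[K]_(r, m)) (k : 'I_r) (c : 'I_m) :
  \sum_l (delta_mx 0 c : 'rV[K]_m) 0 l * M k l = M k c.
Proof.
rewrite (bigD1 c) //= mxE !eqxx /= mul1r big1 ?addr0 // => l hl.
by rewrite mxE eqxx /= (negbTE hl) mul0r.
Qed.

Lemma scal (K : numFieldType) (p m pj mj aa bb mij mji : K) (n : int) :
 (-p) * m - m * p = 2 -> (-pj) * mj - mj * pj = 2 -> (-p) * mij - m * aa = n%:~R ->
 (-aa) * mji - mji * p = 0 -> (-aa) * mj - mji * aa = 0 ->
 (-bb) * mij - mij * pj = 0 -> (-bb) * m - mij * bb = 0 ->
 [\/ [/\ n = 0, aa = 0, bb = 0, mij = 0 & mji = 0],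
     [/\ n = -1, aa = -p, bb = 0, mij = 0 & mji = -mj],
     [/\ n = -1, aa = 0, bb = -pj, mij = -m & mji = 0] |
     [/\ n = -2, aa = -p, bb = -pj, mij = -m & mji = -mj]].
Proof.
move=> E1 E1j E2 E3 E4 E5 E6.
have pm : p * m = -1.
  have h : (p * m + 1) * 2 = - ((-p) * m - m * p - 2) by ring.
  rewrite E1 subrr oppr0 in h.
  move/eqP: h; rewrite mulf_eq0 pnatr_eq0 orbF addr_eq0 => /eqP //.
have pmj : pj * mj = -1.
  have h : (pj * mj + 1) * 2 = - ((-pj) * mj - mj * pj - 2) by ring.
  rewrite E1j subrr oppr0 in h.
  move/eqP: h; rewrite mulf_eq0 pnatr_eq0 orbF addr_eq0 => /eqP //.
have m1 : (-1 : K) != 0 by rewrite oppr_eq0 oner_eq0.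
have p0 : p != 0 by apply: contra_neq m1 => h; rewrite -pm h mul0r.
have m0 : m != 0 by apply: contra_neq m1 => h; rewrite -pm h mulr0.
have pj0 : pj != 0 by apply: contra_neq m1 => h; rewrite -pmj h mul0r.
have mj0 : mj != 0 by apply: contra_neq m1 => h; rewrite -pmj h mulr0.
have h3 : mji * (aa + p) = - ((-aa) * mji - mji * p) by ring.
rewrite E3 oppr0 in h3.
have h4 : aa * (mj + mji) = - ((-aa) * mj - mji * aa) by ring.
rewrite E4 oppr0 in h4.
have h5 : mij * (bb + pj) = - ((-bb) * mij - mij * pj) by ring.
rewrite E5 oppr0 in h5.
have h6 : bb * (m + mij) = - ((-bb) * m - mij * bb) by ring.
rewrite E6 oppr0 in h6.
have HA : (aa = 0 /\ mji = 0) \/ (aa = -p /\ mji = -mj).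
  move/eqP: h4; rewrite mulf_eq0 => /orP[/eqP ha|].
    left; split=> //; move/eqP: h3; rewrite ha add0r mulf_eq0 (negbTE p0) orbF.
    by move/eqP.
  rewrite addrC addr_eq0 => /eqP hm; right; split=> //.
  move/eqP: h3; rewrite mulf_eq0 hm oppr_eq0 (negbTE mj0) /= addr_eq0.
  by move/eqP.
have HB : (bb = 0 /\ mij = 0) \/ (bb = -pj /\ mij = -m).
  move/eqP: h6; rewrite mulf_eq0 => /orP[/eqP ha|].
    left; split=> //; move/eqP: h5; rewrite ha add0r mulf_eq0 (negbTE pj0) orbF.
    by move/eqP.
  rewrite addrC addr_eq0 => /eqP hm; right; split=> //.
  move/eqP: h5; rewrite mulf_eq0 hm oppr_eq0 (negbTE m0) /= addr_eq0.
  by move/eqP.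
case: HA => [[ha hb]|[ha hb]]; case: HB => [[hc hd]|[hc hd]];
  rewrite ha hd in E2.
- apply: Or41; split=> //; apply: (@intr_inj K); rewrite -E2; ring.
- apply: Or43; split=> //; apply: (@intr_inj K); rewrite -E2.
  have -> : (-1 : int)%:~R = (-1 : K) by [].
  rewrite -pm; ring.
- apply: Or42; split=> //; apply: (@intr_inj K); rewrite -E2.
  have -> : (-1 : int)%:~R = (-1 : K) by [].
  rewrite -pm; ring.
- apply: Or44; split=> //; apply: (@intr_inj K); rewrite -E2.
  have -> : (-2 : int)%:~R = (-1 : K) + (-1) by rewrite -opprD.
  rewrite -pm; ring.
Qed.

Theorem theorem3p12
  (R : realType) (r s : nat) (N : 'M[int]_r)
  (hN : gen_cartan N)
  (hs : s = corank (Cplx R) N)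
  (* alpha_j (H) = \sum_k H_k * a j k : linear functionals on h = C^(r+s) *)
  (a : 'M[Cplx R]_(r, r + s))
  (ha_indep : row_free a)
  (ha_cartan : forall i j : 'I_r, a j (lshift s i) = (N i j)%:~R)
  (A : comAlgType (Cplx R))
  (F : 'rV[Cplx R]_(r + s) -> A -> A)
  (hF_lin : forall (c : Cplx R) (H H' : 'rV[Cplx R]_(r + s)) (b : A),
      F (c *: H + H') b = c *: F H b + F H' b)
  (hF_der : forall H, is_derivation (F H))
  (hF_hom : forall H H' (b : A), dbr (F H) (F H') b = 0)
  (v vinv : 'I_r -> A)
  (hv_inv : forall i, v i * vinv i = 1)
  (hv_eig : forall (H : 'rV[Cplx R]_(r + s)) (i : 'I_r),
      F H (v i) = (\sum_k H 0 k * a i k) *: v i)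
  (dp dm : 'I_r -> A -> A)
  (hdp : forall i, exists H, dp i = F H)
  (hdm : forall i, exists H, dm i = F H)
  (hXX : forall i (b : A),
      dbr (lmul_der (v i) (dp i)) (lmul_der (vinv i) (dm i)) b
        = F (Hbasis (Cplx R) (lshift s i)) b)
  (hXX0 : forall i j, i != j -> forall b : A,
      dbr (lmul_der (v i) (dp i)) (lmul_der (vinv j) (dm j)) b = 0) :
  forall i j : 'I_r, i != j ->
    (forall b : A,
       ad_pow (lmul_der (v i) (dp i)) `|1 - N i j|%N (lmul_der (v j) (dp j)) b = 0) /\
    (forall b : A,
       ad_pow (lmul_der (vinv i) (dm i)) `|1 - N i j|%N (lmul_der (vinv j) (dm j)) b = 0).
Proof.
move=> i j hij.
set al := fun (k : 'I_r) (H : 'rV[Cplx R]_(r + s)) => \sum_l H 0 l * a k l.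
have eig : forall H k, F H (v k) = al k H *: v k by move=> H k; exact: hv_eig.
have eigi : forall H k, F H (vinv k) = (- al k H) *: vinv k.
  by move=> H k; apply: (eig_inv hF_lin hF_der hF_hom (hv_inv k)); exact: eig.
have alH : forall k l, al k (Hbasis (Cplx R) (lshift s l)) = (N l k)%:~R.
  by move=> k l; rewrite /al /Hbasis sum_delta ha_cartan.
have [Pi hPi] := hdp i; have [Pj hPj] := hdp j.
have [Mi hMi] := hdm i; have [Mj hMj] := hdm j.
have Xi := hXX i; have Xj := hXX j.
have X0ij := hXX0 i j hij.
have X0ji : forall b, dbr (lmul_der (v j) (dp j)) (lmul_der (vinv i) (dm i)) b = 0.
  by apply: hXX0; rewrite eq_sym.
rewrite hPi in Xi X0ij; rewrite hMi in Xi X0ji; rewrite hPj in Xj X0ji; rewrite hMj in Xj X0ij.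
rewrite hPi hMi hPj hMj.
have brk' := brk hF_lin hF_der hF_hom.
have Bi : forall b, (- al i Pi) *: F Mi b - al i Mi *: F Pi b
                    = F (Hbasis (Cplx R) (lshift s i)) b.
  by move=> b; rewrite -Xi (brk' _ _ _ _ _ _ _ (eigi Pi i) (eig Mi i)) hv_inv mul1r.
have Bj : forall b, (- al j Pj) *: F Mj b - al j Mj *: F Pj b
                    = F (Hbasis (Cplx R) (lshift s j)) b.
  by move=> b; rewrite -Xj (brk' _ _ _ _ _ _ _ (eigi Pj j) (eig Mj j)) hv_inv mul1r.
have unit_ij : (v i * vinv j) * (vinv i * v j) = 1.
  by rewrite mulrACA hv_inv (mulrC (vinv j)) hv_inv mulr1.
have unit_ji : (v j * vinv i) * (vinv j * v i) = 1.
  by rewrite mulrACA hv_inv (mulrC (vinv i)) hv_inv mulr1.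
have Cij : forall b, (- al j Pi) *: F Mj b - al i Mj *: F Pi b = 0.
  move=> b; apply: (cancel_unit (x := v i * vinv j) (y := vinv i * v j)).
    exact: unit_ij.
  by rewrite -(brk' _ _ _ _ _ _ _ (eigi Pi j) (eig Mj i)); exact: X0ij.
have Cji : forall b, (- al i Pj) *: F Mi b - al j Mi *: F Pj b = 0.
  move=> b; apply: (cancel_unit (x := v j * vinv i) (y := vinv j * v i)).
    exact: unit_ji.
  by rewrite -(brk' _ _ _ _ _ _ _ (eigi Pj i) (eig Mi j)); exact: X0ji.
have ev : forall (k : 'I_r) (c1 c2 c3 : Cplx R),
    c1 *: (c2 *: v k) - c3 *: v k = 0 -> c1 * c2 - c3 = 0.
  move=> k c1 c2 c3 h; apply: (scal_unit (hv_inv k)).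
  by rewrite scalerBl -scalerA h scale0r.
have ev2 : forall (k : 'I_r) (c1 c2 c3 c4 : Cplx R),
    c1 *: (c2 *: v k) - c3 *: (c4 *: v k) = 0 -> c1 * c2 - c3 * c4 = 0.
  move=> k c1 c2 c3 c4 h; apply: (scal_unit (hv_inv k)).
  by rewrite scalerBl -!scalerA h scale0r.
have E1 : (- al i Pi) * al i Mi - al i Mi * al i Pi = 2.
  apply/eqP; rewrite -subr_eq0; apply/eqP.
  have h := Bi (v i); rewrite !eig alH in h.
  have [h2 _ _] := hN; rewrite h2 in h.
  have : (- al i Pi) * al i Mi - al i Mi * al i Pi - (2%:Z)%:~R = 0.
    apply: (scal_unit (hv_inv i)); rewrite scale0r !scalerBl -!scalerA h subrr //.
  by [].
have E1j : (- al j Pj) * al j Mj - al j Mj * al j Pj = 2.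
  apply/eqP; rewrite -subr_eq0; apply/eqP.
  have h := Bj (v j); rewrite !eig alH in h.
  have [h2 _ _] := hN; rewrite h2 in h.
  have : (- al j Pj) * al j Mj - al j Mj * al j Pj - (2%:Z)%:~R = 0.
    apply: (scal_unit (hv_inv j)); rewrite scale0r !scalerBl -!scalerA h subrr //.
  by [].
have E2 : (- al i Pi) * al j Mi - al i Mi * al j Pi = (N i j)%:~R.
  have h := Bi (v j); rewrite !eig alH in h.
  apply: (scal_unit (hv_inv j)); by rewrite -h scalerBl -!scalerA.
have E3 : (- al j Pi) * al i Mj - al i Mj * al i Pi = 0.
  by apply: (ev2 i); rewrite -!eig; exact: Cij.
have E4 : (- al j Pi) * al j Mj - al i Mj * al j Pi = 0.
  by apply: (ev2 j); rewrite -!eig; exact: Cij.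
have E5 : (- al i Pj) * al j Mi - al j Mi * al j Pj = 0.
  by apply: (ev2 j); rewrite -!eig; exact: Cji.
have E6 : (- al i Pj) * al i Mi - al j Mi * al i Pj = 0.
  by apply: (ev2 i); rewrite -!eig; exact: Cji.
have S := scal E1 E1j E2 E3 E4 E5 E6.
have serre' := serre hF_lin hF_der hF_hom.
split.
- apply: (serre' _ _ _ _ (al i Pi) (al j Pi) (al i Pj)); rewrite ?eig //.
  case: S => [[-> ha hb _ _]|[-> ha hb _ _]|[-> ha hb _ _]|[-> ha hb _ _]].
  + by apply: Or31.
  + by apply: Or32; split=> //; right.
  + by apply: Or32; split=> //; left.
  + by apply: Or33; split=> //; right.
- apply: (serre' _ _ _ _ (- al i Mi) (- al j Mi) (- al i Mj)); rewrite ?eigi //.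
  case: S => [[-> _ _ hc hd]|[-> _ _ hc hd]|[-> _ _ hc hd]|[-> _ _ hc hd]];
    rewrite hc hd ?oppr0.
  + by apply: Or31.
  + by apply: Or32; split=> //; left.
  + by apply: Or32; split=> //; right.
  + by apply: Or33; split=> //; right.
Qed.
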